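(* Let $(L,[\cdot,\cdot],\cdot,\alpha)$ be a multiplicative Hom-post-Lie algebra, let $(M_i,\diamond_i,\bullet_i,\alpha_{M_i})$, $i=1,2$, be two modules over $L$, and let $k$ be a non-negative integer. On $M_1\otimes M_2$ define $\alpha_M(m_1\otimes m_2)=\alpha_{M_1}(m_1)\otimes\alpha_{M_2}(m_2)$, $x\diamond(m_1\otimes m_2)=(\alpha^k(x)\diamond_1 m_1)\otimes\alpha_{M_2}(m_2)+\alpha_{M_1}(m_1)\otimes(\alpha^k(x)\diamond_2 m_2)$, $x\bullet(m_1\otimes m_2)=(\alpha^k(x)\bullet_1 m_1)\otimes\alpha_{M_2}(m_2)+\alpha_{M_1}(m_1)\otimes(\alpha^k(x)\bullet_2 m_2)$. Then $(M_1\otimes M_2,\diamond,\bullet,\alpha_M)$ is a module over $L$.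
   Context: All vector spaces are over a field $\mathbb{K}$ of characteristic $\neq 2$. A Hom-Lie algebra is $(L,[\cdot,\cdot],\alpha)$ with $[\cdot,\cdot]$ bilinear skew-symmetric, $\alpha$ linear, and $[\alpha(x),[y,z]]+[\alpha(y),[z,x]]+[\alpha(z),[x,y]]=0$. A Hom-post-Lie algebra $(L,[\cdot,\cdot],\cdot,\alpha)$ is a Hom-Lie algebra with bilinear $\cdot$ such that $\alpha(z)\cdot[x,y]-[z\cdot x,\alpha(y)]-[\alpha(x),z\cdot y]=0$ and $\alpha(z)\cdot(y\cdot x)-\alpha(y)\cdot(z\cdot x)+(y\cdot z)\cdot\alpha(x)-(z\cdot y)\cdot\alpha(x)+[y,z]\cdot\alpha(x)=0$ for all $x,y,z$; it is multiplicative if $\alpha([x,y])=[\alpha(x),\alpha(y)]$ and $\alpha(x\cdot y)=\alpha(x)\cdot\alpha(y)$. A module over $L$ is a vector space $M$ with linear $\alpha_M$ and bilinear $\diamond,\bullet:L\otimes M\to M$ such that for all $x,y\in L,m\in M$: (i) $\alpha_M(x\diamond m)=\alpha(x)\diamond\alpha_M(m)$, $\alpha_M(x\bullet m)=\alpha(x)\bullet\alpha_M(m)$; (ii) $[x,y]\diamond\alpha_M(m)=\alpha(x)\diamond(y\diamond m)-\alpha(y)\diamond(x\diamond m)$; (iii) $(x\cdot y)\diamond\alpha_M(m)=\alpha(x)\bullet(y\diamond m)-\alpha(y)\diamond(x\bullet m)$; (iv) $[x,y]\bullet\alpha_M(m)=\alpha(x)\bullet(y\bullet m)-\alpha(y)\bullet(x\bullet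 m)-(x\cdot y)\bullet\alpha_M(m)+(y\cdot x)\bullet\alpha_M(m)$. *)

(* Defs.v *)
From HB Require Import structures.
From mathcomp Require Import all_boot all_order all_algebra.
Set Implicit Arguments. Unset Strict Implicit. Unset Printing Implicit Defensive.
Import GRing.Theory.
Local Open Scope ring_scope.

Section Defs.
Variable K : fieldType.

Definition lin (U V : lmodType K) (f : U -> V) : Prop :=
  forall (a : K) (u v : U), f (a *: u + v) = a *: f u + f v.

Definition bilin (U V W : lmodType K) (f : U -> V -> W) : Prop :=
  (forall u : U, lin (f u)) /\ (forall v : V, lin (fun u => f u v)).

Definition HomLie (L : lmodType K) (br : L -> L -> L) (alpha : L -> L) : Prop :=
  [/\ bilin br, lin alpha,
      (forall x y, br x y = - br y x) &
      (forall x y z, br (alpha x) (br y z) + br (alpha y) (br z x)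
                     + br (alpha z) (br x y) = 0)].

Definition HomPostLie (L : lmodType K) (br dot : L -> L -> L) (alpha : L -> L)
  : Prop :=
  [/\ HomLie br alpha, bilin dot,
      (forall x y z, dot (alpha z) (br x y) - br (dot z x) (alpha y)
                     - br (alpha x) (dot z y) = 0) &
      (forall x y z, dot (alpha z) (dot y x) - dot (alpha y) (dot z x)
                     + dot (dot y z) (alpha x) - dot (dot z y) (alpha x)
                     + dot (br y z) (alpha x) = 0)].

Definition HomPL_multiplicative (L : lmodType K) (br dot : L -> L -> L)
  (alpha : L -> L) : Prop :=
  (forall x y, alpha (br x y) = br (alpha x) (alpha y)) /\
  (forall x y, alpha (dot x y) = dot (alpha x) (alpha y)).

Definition HomPostLieModule (L : lmodType K) (br dot : L -> L -> L)
  (alpha : L -> L) (M : lmodType K) (dia bul : L -> M -> M) (alphaM : M -> M)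
  : Prop :=
  [/\ lin alphaM, bilin dia, bilin bul,
      (forall x m, alphaM (dia x m) = dia (alpha x) (alphaM m)) /\
      (forall x m, alphaM (bul x m) = bul (alpha x) (alphaM m)) &
   [/\
      (forall x y m, dia (br x y) (alphaM m)
                     = dia (alpha x) (dia y m) - dia (alpha y) (dia x m)),
      (forall x y m, dia (dot x y) (alphaM m)
                     = bul (alpha x) (dia y m) - dia (alpha y) (bul x m)) &
      (forall x y m, bul (br x y) (alphaM m)
                     = bul (alpha x) (bul y m) - bul (alpha y) (bul x m)
                       - bul (dot x y) (alphaM m) + bul (dot y x) (alphaM m))]].

Definition is_tensor_product (M1 M2 T : lmodType K) (t : M1 -> M2 -> T)
  : Prop :=
  bilin t /\
  forall (W : lmodType K) (f : M1 -> M2 -> W), bilin f ->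
    exists g : T -> W,
      [/\ lin g, (forall m1 m2, g (t m1 m2) = f m1 m2) &
          (forall g' : T -> W, lin g' ->
             (forall m1 m2, g' (t m1 m2) = f m1 m2) -> forall u, g' u = g u)].

End Defs.

(* Main.v *)
Require Import Defs.
From mathcomp Require Import all_boot all_order all_algebra.
Import GRing.Theory.
Local Open Scope ring_scope.

Set Implicit Arguments. Unset Strict Implicit.
Section H.
Variable K : fieldType.

Lemma linD (U V : lmodType K) (f : U -> V) : lin f -> forall u v, f (u + v) = f u + f v.
Proof. by move=> hf u v; have := hf 1 u v; rewrite !scale1r. Qed.
Lemma lin0 (U V : lmodType K) (f : U -> V) : lin f -> f 0 = 0.
Proof. by move=> hf; have := hf (-1) 0 0; rewrite scaler0 addr0 scaleN1r addNr. Qed.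
Lemma linB (U V : lmodType K) (f : U -> V) : lin f -> forall u v, f (u - v) = f u - f v.
Proof.
move=> hf u v; rewrite linD //; congr (_ + _).
by have := hf (-1) v 0; rewrite !addr0 lin0 // addr0 !scaleN1r.
Qed.

Lemma lin_ext (M1 M2 T W : lmodType K) (t : M1 -> M2 -> T) (g1 g2 : T -> W) :
  is_tensor_product t -> lin g1 -> lin g2 ->
  (forall m1 m2, g1 (t m1 m2) = g2 (t m1 m2)) -> forall u, g1 u = g2 u.
Proof.
move=> [[ht1 ht2] hU] l1 l2 e u.
have bf : bilin (fun m1 m2 => g1 (t m1 m2)).
  split=> [m a x y|m a x y] /=.
    by rewrite ht1 l1.
  by rewrite (ht2 m) l1.
have [g [_ _ hg]] := hU W _ bf.
by rewrite (hg g1) // (hg g2).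
Qed.

Lemma lin_comp (U V W : lmodType K) (f : V -> W) (g : U -> V) :
  lin f -> lin g -> lin (fun u => f (g u)).
Proof. by move=> hf hg a u v; rewrite hg hf. Qed.
Lemma lin_sub (U V : lmodType K) (f g : U -> V) :
  lin f -> lin g -> lin (fun u => f u - g u).
Proof.
move=> hf hg a u v; rewrite hf hg scalerBr.
by rewrite !opprD !addrA; congr (_ - _); rewrite addrAC.
Qed.

Lemma zid1 (V : zmodType) (A B C D P Q : V) :
  A - B + (C - D) = (A + P + Q + C) - (B + Q + P + D).
Proof.
rewrite !opprD !addrA; congr (_ - _).
rewrite (addrAC _ (-B)) (addrAC _ (-B)) (addrAC _ (-B)); congr (_ - _).
rewrite -!addrA; congr (_ + _); rewrite !addrA.
by rewrite (addrAC P) addrK addrC addKr.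
Qed.
End H.
Section Z.
Lemma zid2 (V : zmodType) (A B C D P Q : V) :
  A - B + (C - D) = A + P + (Q + C) - (B + Q + (P + D)).
Proof.
rewrite (addrC Q C) (addrACA A P C Q) (addrC P D) (addrACA B Q D P) (addrC Q P).
by rewrite (addrC (B + D)) addrKA (addrACA A (-B)) opprD.
Qed.
Lemma zid3 (V : zmodType) (A B C D P Q E F G H : V) :
  A - B - E + F + (C - D - G + H) =
  A + P + (Q + C) - (B + Q + (P + D)) - (E + G) + (F + H).
Proof.
rewrite -(zid2 A B C D P Q) opprD.
rewrite (addrACA (A - B - E) F (C - D - G) H); congr (_ + _).
by rewrite (addrACA (A - B) (- E) (C - D) (- G)).
Qed.
End Z.
Lemma lin_add (K : fieldType) (U V : lmodType K) (f g : U -> V) :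
  lin f -> lin g -> lin (fun u => f u + g u).
Proof.
move=> hf hg a u v; rewrite hf hg scalerDr.
by rewrite -!addrA; congr (_ + _); rewrite addrCA.
Qed.
Unset Implicit Arguments.
Theorem mainTheorem3 (K : fieldType) (hchar : (2 \notin [pchar K])%N)
  (L : lmodType K) (br dot : L -> L -> L) (alpha : L -> L)
  (hL : HomPostLie br dot alpha) (hmul : HomPL_multiplicative br dot alpha)
  (M1 : lmodType K) (dia1 bul1 : L -> M1 -> M1) (alpha1 : M1 -> M1)
  (hM1 : HomPostLieModule br dot alpha dia1 bul1 alpha1)
  (M2 : lmodType K) (dia2 bul2 : L -> M2 -> M2) (alpha2 : M2 -> M2)
  (hM2 : HomPostLieModule br dot alpha dia2 bul2 alpha2)
  (k : nat)
  (T : lmodType K) (t : M1 -> M2 -> T) (hT : is_tensor_product t)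
  (alphaM : T -> T) (dia bul : L -> T -> T)
  (halphaM_lin : lin alphaM) (hdia_lin : bilin dia) (hbul_lin : bilin bul)
  (halphaM : forall m1 m2, alphaM (t m1 m2) = t (alpha1 m1) (alpha2 m2))
  (hdia : forall x m1 m2, dia x (t m1 m2) =
     t (dia1 (iter k alpha x) m1) (alpha2 m2)
     + t (alpha1 m1) (dia2 (iter k alpha x) m2))
  (hbul : forall x m1 m2, bul x (t m1 m2) =
     t (bul1 (iter k alpha x) m1) (alpha2 m2)
     + t (alpha1 m1) (bul2 (iter k alpha x) m2)) :
  HomPostLieModule br dot alpha dia bul alphaM.
Proof.
have [[hbrl hal hskew hjac] hdotl hc1 hc2] := hL.
have [mbr mdot] := hmul.
have [hal1 hdia1 hbul1 [hA1d hA1b] [hM1a hM1b hM1c]] := hM1.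
have [hal2 hdia2 hbul2 [hA2d hA2b] [hM2a hM2b hM2c]] := hM2.
have [[ht1 ht2] _] := hT.
have itA : forall x, iter k alpha (alpha x) = alpha (iter k alpha x).
  by move=> x; rewrite -iterSr.
have itbr : forall x y, iter k alpha (br x y) = br (iter k alpha x) (iter k alpha y).
  have gen : forall n x y, iter n alpha (br x y) = br (iter n alpha x) (iter n alpha y).
    by elim=> // n IH x y; rewrite !iterS IH mbr.
  exact: gen.
have itdot : forall x y, iter k alpha (dot x y) = dot (iter k alpha x) (iter k alpha y).
  have gen : forall n x y, iter n alpha (dot x y) = dot (iter n alpha x) (iter n alpha y).
    by elim=> // n IH x y; rewrite !iterS IH mdot.
  exact: gen.
have tBl : forall a b m, t (a - b) m = t a m - t b m := fun a b m => linB (ht2 m) a b.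
have tDl : forall a b m, t (a + b) m = t a m + t b m := fun a b m => linD (ht2 m) a b.
have tBr : forall m a b, t m (a - b) = t m a - t m b := fun m a b => linB (ht1 m) a b.
have tDr : forall m a b, t m (a + b) = t m a + t m b := fun m a b => linD (ht1 m) a b.
have diaD : forall x u v, dia x (u + v) = dia x u + dia x v :=
  fun x u v => linD (hdia_lin.1 x) u v.
have bulD : forall x u v, bul x (u + v) = bul x u + bul x v :=
  fun x u v => linD (hbul_lin.1 x) u v.
split => //.
- split => x.
  + apply: (lin_ext (g1 := fun u => alphaM (dia x u))
             (g2 := fun u => dia (alpha x) (alphaM u)) hT).
    * exact: lin_comp halphaM_lin (hdia_lin.1 x).
    * exact: lin_comp (hdia_lin.1 _) halphaM_lin.
    move=> m1 m2 /=.
    by rewrite hdia (linD halphaM_lin) !halphaM hdia itA hA1d hA2d.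
  + apply: (lin_ext (g1 := fun u => alphaM (bul x u))
             (g2 := fun u => bul (alpha x) (alphaM u)) hT).
    * exact: lin_comp halphaM_lin (hbul_lin.1 x).
    * exact: lin_comp (hbul_lin.1 _) halphaM_lin.
    move=> m1 m2 /=.
    by rewrite hbul (linD halphaM_lin) !halphaM hbul itA hA1b hA2b.
split.
- move=> x y.
  apply: (lin_ext (g1 := fun u => dia (br x y) (alphaM u))
             (g2 := fun u => dia (alpha x) (dia y u) - dia (alpha y) (dia x u)) hT).
  + exact: lin_comp (hdia_lin.1 _) halphaM_lin.
  + by apply: lin_sub; apply: lin_comp (hdia_lin.1 _) (hdia_lin.1 _).
  move=> m1 m2 /=.
  rewrite halphaM !hdia !diaD !hdia !itA itbr hM1a hM2a !tBl !tBr !hA1d !hA2d.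
  exact: zid2.
- move=> x y.
  apply: (lin_ext (g1 := fun u => dia (dot x y) (alphaM u))
             (g2 := fun u => bul (alpha x) (dia y u) - dia (alpha y) (bul x u)) hT).
  + exact: lin_comp (hdia_lin.1 _) halphaM_lin.
  + by apply: lin_sub; [apply: lin_comp (hbul_lin.1 _) (hdia_lin.1 _) |
                        apply: lin_comp (hdia_lin.1 _) (hbul_lin.1 _)].
  move=> m1 m2 /=.
  rewrite halphaM !hdia !hbul !bulD !diaD !hdia !hbul !itA itdot hM1b hM2b !tBl !tBr !hA1d !hA2d !hA1b !hA2b.
  exact: zid2.
- move=> x y.
  apply: (lin_ext (g1 := fun u => bul (br x y) (alphaM u))
             (g2 := fun u => bul (alpha x) (bul y u) - bul (alpha y) (bul x u)
                  - bul (dot x y) (alphaM u) + bul (dot y x) (alphaM u)) hT).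
  + exact: lin_comp (hbul_lin.1 _) halphaM_lin.
  + apply: lin_add; last exact: lin_comp (hbul_lin.1 _) halphaM_lin.
    apply: lin_sub; last exact: lin_comp (hbul_lin.1 _) halphaM_lin.
    by apply: lin_sub; apply: lin_comp (hbul_lin.1 _) (hbul_lin.1 _).
  move=> m1 m2 /=.
  rewrite halphaM !hbul !bulD !hbul !itA !itdot itbr hM1c hM2c.
  rewrite tDl !tBl tDr !tBr !hA1b !hA2b.
  exact: zid3.
Qed.
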